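(* Let $G$ and $H$ be graphs each having at least one edge. Then the lexicographic product $G\circ H$ is well-bicovered if and only if (i) $G$ is well-covered; and (ii) $H$ is both well-covered and well-bicovered, and $b(H)=2\alpha(H)$.
   Context: All graphs are finite and simple; ''subgraph'' means induced subgraph. $b(G)$ denotes the maximum order of an induced bipartite subgraph of $G$. A graph is well-bicovered if every vertex-inclusion-maximal induced bipartite subgraph has the same order. A graph is well-covered if every maximal independent set has the same cardinality, the independence number $\alpha$. The lexicographic product $G\circ H$ has vertex set $V(G)\times V(H)$, with $(u,v)$ adjacent to $(x,y)$ iff $ux\in E(G)$, or $u=x$ and $vy\in E(H)$. *)

(* Defs.v *)
From mathcomp Require Import all_boot.
Set Implicit Arguments. Unset Strict Implicit. Unset Printing Implicit Defensive.

Record graph := Graph {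
  vert : finType;
  adj : rel vert;
  adj_sym : symmetric adj;
  adj_irr : irreflexive adj }.

Section G.
Variable G : graph.
Local Notation V := (vert G).
Local Notation e := (@adj G).

Definition has_edge : Prop := exists x y : V, e x y.

Definition independent (A : {set V}) : bool :=
  [forall x in A, forall y in A, ~~ e x y].

Definition maximal_independent (A : {set V}) : bool :=
  independent A && [forall x, (x \notin A) ==> ~~ independent (x |: A)].

Definition alpha : nat := \max_(A : {set V} | independent A) #|A|.

Definition well_covered : Prop :=
  forall A B : {set V}, maximal_independent A -> maximal_independent B ->
    #|A| = #|B|.

(* A vertex set induces a bipartite subgraph iff it is the union of two
   independent sets. *)
Definition bipartite_set (A : {set V}) : bool :=
  [exists X : {set V}, (X \subset A) && independent X && independent (A :\: X)].

Definition maximal_bipartite (A : {set V}) : bool :=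
  bipartite_set A && [forall x, (x \notin A) ==> ~~ bipartite_set (x |: A)].

Definition bip_num : nat := \max_(A : {set V} | bipartite_set A) #|A|.

Definition well_bicovered : Prop :=
  forall A B : {set V}, maximal_bipartite A -> maximal_bipartite B ->
    #|A| = #|B|.
End G.

Section Lex.
Variables G H : graph.
Definition lex_adj : rel (vert G * vert H) :=
  fun p q => adj p.1 q.1 || ((p.1 == q.1) && adj p.2 q.2).

Lemma lex_adj_sym : symmetric lex_adj.
Proof.
move=> [u v] [x y]; rewrite /lex_adj /= (adj_sym u x) (adj_sym v y).
by rewrite (eq_sym u x).
Qed.

Lemma lex_adj_irr : irreflexive lex_adj.
Proof. by move=> [u v]; rewrite /lex_adj /= !adj_irr eqxx. Qed.

Definition lex_prod : graph :=
  @Graph (vert G * vert H)%type lex_adj lex_adj_sym lex_adj_irr.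
End Lex.

(* Main.v *)
Require Import Defs.
From mathcomp Require Import all_boot zify.
Set Implicit Arguments. Unset Strict Implicit. Unset Printing Implicit Defensive.

Lemma extend_max (T : finType) (P : pred {set T}) (A0 : {set T}) :
  P A0 -> exists2 A : {set T}, A0 \subset A & P A && [forall x, (x \notin A) ==> ~~ P (x |: A)].
Proof.
move=> PA0.
pose Q := [pred A : {set T} | P A && (A0 \subset A)].
have P0 : Q A0 by rewrite /Q inE /= PA0 subxx.
case: (@arg_maxnP _ A0 Q (fun A : {set T} => #|A|) P0) => A /andP[PA sA] Amax.
exists A => //; rewrite PA /=; apply/forallP => x; apply/implyP => xA.
apply/negP => Px.
have := Amax (x |: A); rewrite /Q inE /= Px (subset_trans sA (subsetUr _ _)) => /(_ isT).
by rewrite cardsU1 xA ltnn.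
Qed.

Section Gen.
Variable G : graph.
Local Notation V := (vert G).

Lemma indepP (A : {set V}) :
  reflect (forall x y, x \in A -> y \in A -> ~~ adj x y) (independent A).
Proof.
apply: (iffP forall_inP) => [h x y xA yA | h x xA].
  by move/forall_inP: (h x xA); apply.
by apply/forall_inP => y yA; exact: h.
Qed.

Lemma bipP (A : {set V}) :
  reflect (exists X : {set V}, [/\ X \subset A, independent X & independent (A :\: X)])
    (bipartite_set A).
Proof.
apply: (iffP existsP) => [[X /andP[/andP[h1 h2] h3]] | [X [h1 h2 h3]]].
  by exists X.
by exists X; rewrite h1 h2 h3.
Qed.

Lemma maxindP (A : {set V}) : maximal_independent A ->
  independent A /\ forall x, x \notin A -> exists2 y, y \in A & adj x y.
Proof.
case/andP=> iA /forallP mA; split => // x xA.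
move: (mA x); rewrite xA /= => /indepP nI.
have [y yA | ] := pickP [pred y | (y \in A) && adj x y].
  by case/andP: yA => yA axy; exists y.
move=> hn; exfalso; apply: nI => y z.
rewrite !in_setU1 => /orP[/eqP-> | yA] /orP[/eqP-> | zA].
- by rewrite adj_irr.
- by have := hn z; rewrite /= zA /= => ->.
- by have := hn y; rewrite /= yA /= adj_sym => ->.
- by move/indepP: iA; apply.
Qed.

Lemma maxind_intro (A : {set V}) : independent A ->
  (forall x, x \notin A -> exists2 y, y \in A & adj x y) -> maximal_independent A.
Proof.
move=> iA h; rewrite /maximal_independent iA /=; apply/forallP => x.
apply/implyP => xA; case: (h x xA) => y yA axy; apply/indepP => hI.
by move: (hI x y (setU11 _ _) (setU1r _ yA)); rewrite axy.
Qed.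

Lemma maxbipP (A : {set V}) : maximal_bipartite A ->
  bipartite_set A /\ forall x, x \notin A -> ~~ bipartite_set (x |: A).
Proof.
case/andP=> bA /forallP mA; split => // x xA.
by move: (mA x); rewrite xA.
Qed.

Lemma indep_le (A : {set V}) : independent A -> #|A| <= alpha G.
Proof. by move=> iA; apply: (@leq_bigmax_cond _ (fun A => independent A)). Qed.

Lemma bip_le (A : {set V}) : bipartite_set A -> #|A| <= bip_num G.
Proof. by move=> iA; apply: (@leq_bigmax_cond _ (fun A => bipartite_set A)). Qed.

Lemma indep0 : independent (set0 : {set V}).
Proof. by apply/indepP => x y; rewrite inE. Qed.

Lemma bip0 : bipartite_set (set0 : {set V}).
Proof. by apply/bipP; exists set0; rewrite sub0set setD0 indep0. Qed.

Lemma alpha_max : exists2 A : {set V}, maximal_independent A & #|A| = alpha G.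
Proof.
have : 0 < #|[pred A : {set V} | independent A]|.
  by apply/card_gt0P; exists set0; rewrite inE indep0.
case/(eq_bigmax_cond (fun A : {set V} => #|A|)) => A0; rewrite inE => iA0 e.
case: (extend_max iA0) => A sA /andP[iA mA].
exists A; first by rewrite /maximal_independent iA.
apply/eqP; rewrite eqn_leq indep_le // /alpha.
rewrite (eq_bigl (fun A => A \in [pred A : {set V} | independent A])) //.
by rewrite e subset_leq_card.
Qed.

Lemma bip_max : exists2 A : {set V}, maximal_bipartite A & #|A| = bip_num G.
Proof.
have : 0 < #|[pred A : {set V} | bipartite_set A]|.
  by apply/card_gt0P; exists set0; rewrite inE bip0.
case/(eq_bigmax_cond (fun A : {set V} => #|A|)) => A0; rewrite inE => iA0 e.
case: (extend_max iA0) => A sA /andP[iA mA].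
exists A; first by rewrite /maximal_bipartite iA.
apply/eqP; rewrite eqn_leq bip_le // /bip_num.
rewrite (eq_bigl (fun A => A \in [pred A : {set V} | bipartite_set A])) //.
by rewrite e subset_leq_card.
Qed.

Lemma wc_alpha (A : {set V}) : well_covered G -> maximal_independent A -> #|A| = alpha G.
Proof. by move=> wc mA; case: alpha_max => B mB <-; exact: wc. Qed.

Lemma wb_bip (A : {set V}) : well_bicovered G -> maximal_bipartite A -> #|A| = bip_num G.
Proof. by move=> wc mA; case: bip_max => B mB <-; exact: wc. Qed.

Lemma maxbip_edge (A : {set V}) : has_edge G -> maximal_bipartite A ->
  exists x y, [/\ x \in A, y \in A & adj x y].
Proof.
move=> [x0 [y0 e0]] /maxbipP [bA mA].
case: (boolP (independent A)) => iA.
  have allA : forall w, w \in A.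
    move=> w; apply: contraT => wA; rewrite -(negbTE (mA w wA)).
    apply/bipP; exists A; rewrite subsetUr iA; split => //.
    apply/indepP => x y; rewrite !inE.
    case/andP=> xA /orP[/eqP-> | xA']; last by rewrite xA' in xA.
    case/andP=> yA /orP[/eqP-> | yA']; last by rewrite yA' in yA.
    by rewrite adj_irr.
  by exists x0, y0; rewrite !allA.
move/indepP: iA => iA.
have [[x y] /and3P[xA yA axy] | h] :=
  pickP [pred p : V * V | [&& p.1 \in A, p.2 \in A & adj p.1 p.2]].
  by exists x, y.
by exfalso; apply: iA => x y xA yA; have := h (x, y); rewrite /= xA yA /= => ->.
Qed.

Lemma maxind_nonempty (A : {set V}) (x0 : V) : maximal_independent A -> exists y, y \in A.
Proof.
case/maxindP => _ h; case: (boolP (x0 \in A)) => [xA | /h [y yA _]]; by eauto.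
Qed.

Lemma bip_le2 : bip_num G <= 2 * alpha G.
Proof.
case: bip_max => M /maxbipP [/bipP [X [sX iX iD]] _] <-.
rewrite -(cardsID X M) mul2n -addnn leq_add //.
  by rewrite (setIidPr sX) indep_le.
by apply: indep_le.
Qed.

Lemma indep_sub (A B : {set V}) : B \subset A -> independent A -> independent B.
Proof.
move=> sBA /indepP iA; apply/indepP => x y xB yB.
by apply: iA; apply: (subsetP sBA).
Qed.

Lemma indep1 (x : V) : independent [set x].
Proof. by apply/indepP => y z; rewrite !inE => /eqP-> /eqP->; rewrite adj_irr. Qed.

Lemma setDDK (A X : {set V}) : X \subset A -> A :\: (A :\: X) = X.
Proof.
move=> sXA; apply/setP => x; rewrite !inE.
case xX: (x \in X) => /=; first by rewrite (subsetP sXA x xX).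
by case: (x \in A).
Qed.

Lemma add_bip (S X : {set V}) (p : V) : X \subset S -> independent X ->
  independent (S :\: X) -> (forall q, q \in X -> ~~ adj p q) -> bipartite_set (p |: S).
Proof.
move=> sX iX iD hp; apply/bipP; exists (p |: X); split.
- by apply: setUS.
- apply/indepP => x y; rewrite !in_setU1 => /orP[/eqP-> | xX] /orP[/eqP-> | yX].
  + by rewrite adj_irr.
  + exact: hp.
  + by rewrite adj_sym hp.
  + by move/indepP: iX; apply.
- apply: indep_sub iD; apply/subsetP => x; rewrite !inE.
  case/andP=> /norP[xp' xX] /orP[xp | ->]; last by rewrite xX.
  by rewrite xp in xp'.
Qed.

Lemma side (S X : {set V}) (p q : V) : X \subset S -> independent X ->
  independent (S :\: X) -> p \in S -> q \in S -> adj p q -> (p \in X) = (q \notin X).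
Proof.
move=> sX /indepP iX /indepP iD pS qS apq.
case pX: (p \in X); case qX: (q \in X) => //=.
  by move: (iX p q pX qX); rewrite apq.
by move: (iD p q); rewrite !inE pX qX pS qS apq => /(_ isT isT).
Qed.

Lemma triangle (S : {set V}) (p q r : V) : bipartite_set S -> p \in S -> q \in S ->
  r \in S -> adj p q -> adj q r -> adj p r -> False.
Proof.
case/bipP=> X [sX iX iD] pS qS rS apq aqr apr.
have h1 := side sX iX iD pS qS apq.
have h2 := side sX iX iD qS rS aqr.
have h3 := side sX iX iD pS rS apr.
by move: h1 h2 h3; case: (p \in X); case: (q \in X); case: (r \in X).
Qed.

Lemma bip_out (S : {set V}) (p : V) : bipartite_set S ->
  exists X : {set V}, [/\ X \subset S, independent X, independent (S :\: X) & p \notin X].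
Proof.
case/bipP=> X [sX iX iD]; case pX: (p \in X); last by exists X; rewrite pX.
exists (S :\: X); rewrite setDDK // subsetDl; split => //.
by rewrite inE pX.
Qed.

End Gen.

Section Lex2.
Variables G H : graph.
Local Notation K := (lex_prod G H).
Local Notation VK := (vert K).

Definition fib (S : {set VK}) (u : vert G) : {set vert H} :=
  [set v | ((u, v) : VK) \in S].
Definition proj (X : {set VK}) : {set vert G} :=
  [set u | [exists v, ((u, v) : VK) \in X]].
Definition swap (T : {set VK}) (u : vert G) (F : {set vert H}) : {set VK} :=
  [set p : VK | if p.1 == u then p.2 \in F else p \in T].

Lemma adjK (p q : VK) : adj p q = adj p.1 q.1 || (p.1 == q.1) && adj p.2 q.2.
Proof. by []. Qed.

Lemma fibE (S : {set VK}) (u : vert G) (v : vert H) : (v \in fib S u) = (((u, v) : VK) \in S).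
Proof. by rewrite inE. Qed.

Lemma projP (X : {set VK}) (u : vert G) : reflect (exists v, ((u, v) : VK) \in X) (u \in proj X).
Proof. by rewrite inE; apply: existsP. Qed.

Lemma swapE (T : {set VK}) (u : vert G) (F : {set vert H}) (p : VK) : (p \in swap T u F) = (if p.1 == u then p.2 \in F else p \in T).
Proof. by rewrite inE. Qed.

Lemma proj_indep (X : {set VK}) : independent X -> independent (proj X).
Proof.
move/indepP=> iX; apply/indepP => x y /projP[v xv] /projP[w yw].
by apply: contraNN (iX _ _ xv yw); rewrite adjK /= => ->.
Qed.

Lemma fib_indep (X : {set VK}) (u : vert G) : independent X -> independent (fib X u).
Proof.
move/indepP=> iX; apply/indepP => v w; rewrite !fibE => xv xw.
by apply: contraNN (iX _ _ xv xw); rewrite adjK /= eqxx => ->; rewrite orbT.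
Qed.

Lemma fib_bip (T : {set VK}) (u : vert G) : bipartite_set T -> bipartite_set (fib T u).
Proof.
case/bipP=> X [sX iX iD]; apply/bipP; exists (fib X u); split.
- by apply/subsetP => v; rewrite !fibE; apply: (subsetP sX).
- exact: fib_indep.
- have -> : fib T u :\: fib X u = fib (T :\: X) u.
    by apply/setP => v; rewrite !inE.
  exact: fib_indep.
Qed.

Lemma swap_indep (Z : {set VK}) (u : vert G) (Y : {set vert H}) : independent Z -> independent Y ->
  (forall w y z, ((w, y) : VK) \in Z -> w != u -> z \in Y -> ~~ adj u w) ->
  independent (swap Z u Y).
Proof.
move=> /indepP iZ /indepP iY hZ; apply/indepP => [[x1 y1] [x2 y2]].
rewrite !swapE /=.
case: (eqVneq x1 u) => [->|n1]; case: (eqVneq x2 u) => [->|n2] h1 h2.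
- by rewrite /lex_adj /= adj_irr eqxx /= iY.
- by rewrite /lex_adj /= (negbTE (hZ _ _ _ h2 n2 h1)) /= eq_sym (negbTE n2).
- by rewrite /lex_adj /= adj_sym (negbTE (hZ _ _ _ h1 n1 h2)) /= (negbTE n1).
- exact: iZ.
Qed.

Lemma swap_bip (T Z : {set VK}) (u : vert G) (F Y : {set vert H}) : Z \subset T -> independent Z -> independent (T :\: Z) ->
  Y \subset F -> independent Y -> independent (F :\: Y) ->
  (forall w y z, ((w, y) : VK) \in Z -> w != u -> z \in Y -> ~~ adj u w) ->
  (forall w y z, ((w, y) : VK) \in T :\: Z -> w != u -> z \in F :\: Y -> ~~ adj u w) ->
  bipartite_set (swap T u F).
Proof.
move=> sZ iZ iD sY iY iFY h1 h2; apply/bipP; exists (swap Z u Y); split.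
- apply/subsetP => p; rewrite !swapE; case: ifP => _.
    exact: (subsetP sY).
  exact: (subsetP sZ).
- exact: swap_indep.
- have -> : swap T u F :\: swap Z u Y = swap (T :\: Z) u (F :\: Y).
    by apply/setP => p; rewrite !inE; case: ifP.
  exact: swap_indep.
Qed.

Lemma indepX (A : {set vert G}) (Y : {set vert H}) :
  independent A -> independent Y -> independent (setX A Y : {set VK}).
Proof.
move=> /indepP iA /indepP iY; apply/indepP => [[x1 y1] [x2 y2]].
rewrite !inE /= => /andP[a1 b1] /andP[a2 b2].
by rewrite /lex_adj /= (negbTE (iA _ _ a1 a2)) (negbTE (iY _ _ b1 b2)) andbF.
Qed.

Lemma card_fib (S : {set VK}) : #|S| = \sum_u #|fib S u|.
Proof.
rewrite -sum1_card big_mkcond /=.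
have -> : \sum_u #|fib S u| = \sum_u \sum_v (if ((u, v) : VK) \in S then 1 else 0).
  apply: eq_bigr => u _; rewrite -sum1_card big_mkcond /=.
  by apply: eq_bigr => v _; rewrite fibE.
rewrite pair_big /=; apply: eq_bigr => [[u v]] _ //.
Qed.

End Lex2.

Section Lex3.
Variables G H : graph.
Local Notation K := (lex_prod G H).
Local Notation VK := (vert K).

Lemma max_proj (S X : {set VK}) : has_edge H -> maximal_bipartite S ->
  X \subset S -> independent X -> independent (S :\: X) ->
  forall x, x \notin proj X -> exists2 a, a \in proj X & adj x a.
Proof.
move=> hE /maxbipP [bS mS] sX iX iD x xP.
have [a /andP[aP axa] | hn] := pickP [pred a | (a \in proj X) && adj x a].
  by exists a.
exfalso.
have allS : forall v, ((x, v) : VK) \in S.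
  move=> v; apply: contraT => nS; rewrite -(negbTE (mS _ nS)).
  apply: (add_bip sX iX iD) => [[w y]] qX.
  have wP : w \in proj X by apply/projP; exists y.
  rewrite /= /lex_adj /=.
  have := hn w; rewrite /= wP /= => ->.
  have -> : (x == w) = false by apply/negP => /eqP e; rewrite e wP in xP.
  by [].
case: hE => y1 [y2 e].
have nX : forall v, ((x, v) : VK) \notin X.
  by move=> v; apply/negP => h; move/negP: xP; apply; apply/projP; exists v.
move/indepP: iD => /(_ (x, y1) (x, y2)); rewrite !inE !nX !allS /=.
by rewrite /lex_adj /= eqxx adj_irr e => /(_ isT isT).
Qed.

Lemma maxind_proj (S X : {set VK}) : has_edge H -> maximal_bipartite S ->
  X \subset S -> independent X -> independent (S :\: X) ->
  maximal_independent (proj X).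
Proof.
move=> hE mS sX iX iD; apply: maxind_intro; first exact: proj_indep.
exact: max_proj mS sX iX iD.
Qed.

Lemma fib_one (S X : {set VK}) (u : vert G) : maximal_bipartite S ->
  X \subset S -> independent X -> independent (S :\: X) ->
  u \in proj X -> u \notin proj (S :\: X) -> maximal_independent (fib S u).
Proof.
move=> /maxbipP [bS mS] sX iX iD uA uB.
have fE : fib S u = fib X u.
  apply/setP => v; rewrite !fibE; apply/idP/idP; last exact: (subsetP sX).
  move=> h; apply: contraT => nX; rewrite -(negbTE uB).
  by apply/projP; exists v; rewrite inE nX h.
apply: maxind_intro; first by rewrite fE; exact: fib_indep.
move=> v vn.
have [y /andP[yF ay] | hn] := pickP [pred y | (y \in fib S u) && adj v y].
  by exists y.
exfalso; move: vn; rewrite fibE => vn; move/negP: (mS _ vn); apply.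
apply: (add_bip sX iX iD) => [[w y]] qX.
have wP : w \in proj X by apply/projP; exists y.
move/indepP: (proj_indep iX) => ipX.
rewrite /= /lex_adj /= (negbTE (ipX _ _ uA wP)) /=.
case: (eqVneq u w) => [e|] //=; subst w.
have := hn y; rewrite /= fE fibE qX /= => ->.
by [].
Qed.

Lemma fib_two (S X : {set VK}) (u : vert G) : maximal_bipartite S ->
  X \subset S -> independent X -> independent (S :\: X) ->
  u \in proj X -> u \in proj (S :\: X) -> maximal_bipartite (fib S u).
Proof.
move=> /maxbipP [bS mS] sX iX iD uA uB.
rewrite /maximal_bipartite fib_bip //=; apply/forallP => v; apply/implyP => vn.
apply/negP => /bipP [Y [sY iY iFY]].
have bsw : bipartite_set (swap S u (v |: fib S u)).
  apply: (swap_bip sX iX iD sY iY iFY).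
    move=> w y z wX _ _; move/indepP: (proj_indep iX); apply => //.
    by apply/projP; exists y.
  move=> w y z wX _ _; move/indepP: (proj_indep iD); apply => //.
  by apply/projP; exists y.
have e : swap S u (v |: fib S u) = ((u, v) : VK) |: S.
  apply/setP => [[w y]]; rewrite swapE !inE /= xpair_eqE.
  by case: (eqVneq w u) => [->|] //=; rewrite fibE.
move: vn; rewrite fibE => vn.
by move/negP: (mS _ vn); apply; rewrite -e.
Qed.

End Lex3.

Section Lex4.
Variables G H : graph.
Local Notation K := (lex_prod G H).
Local Notation VK := (vert K).

Lemma fib_replace (S X : {set VK}) (u : vert G) (J : {set vert H}) :
  has_edge H -> maximal_bipartite S ->
  X \subset S -> independent X -> independent (S :\: X) ->
  u \in proj X -> u \notin proj (S :\: X) -> maximal_independent J ->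
  maximal_bipartite (swap S u J).
Proof.
move=> hE mS sX iX iD uA uB mJ.
have [bS mSx] := maxbipP mS.
have sX' : S :\: X \subset S := subsetDl S X.
have iD' : independent (S :\: (S :\: X)) by rewrite setDDK.
case: (max_proj hE mS sX' iD iD' uB) => w wB auw.
case/projP: wB => z wz.
have wzS : ((w, z) : VK) \in S by move: wz; rewrite inE => /andP[].
have wu : w != u by apply: contraTneq auw => ->; rewrite adj_irr.
have iFu : independent (fib S u).
  apply: (indep_sub _ (fib_indep u iX)); apply/subsetP => v; rewrite !fibE => h.
  apply: contraT => nX; rewrite -(negbTE uB).
  by apply/projP; exists v; rewrite inE nX h.
have [iJ mJ'] := maxindP mJ.
have [y0 _] : exists y0 : vert H, True by case: hE => y0 _; exists y0.
have [j0 j0J] := maxind_nonempty y0 mJ.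
have iJJ : forall (F : {set vert H}), independent (F :\: F) by move=> F; rewrite setDv indep0.
rewrite /maximal_bipartite; apply/andP; split.
  apply: (swap_bip sX iX iD (subxx J) iJ (iJJ J)).
    move=> w' y z' wX _ _; move/indepP: (proj_indep iX); apply => //.
    by apply/projP; exists y.
  by move=> w' y z' _ _; rewrite setDv inE.
apply/forallP => [[x v]]; apply/implyP => xn; apply/negP => bT.
have wzT : ((w, z) : VK) \in ((x, v) : VK) |: swap S u J.
  by rewrite setU1r // swapE /= (negbTE wu).
case: (eqVneq x u) => [exu | nxu].
  rewrite exu in xn bT wzT; move: xn; rewrite swapE /= eqxx => vJ.
  case: (mJ' v vJ) => j jJ avj.
  have ujT : ((u, j) : VK) \in ((u, v) : VK) |: swap S u J.
    by rewrite setU1r // swapE /= eqxx.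
  apply: (triangle bT (setU11 _ _) ujT wzT).
  - by rewrite /= /lex_adj /= eqxx adj_irr avj.
  - by rewrite /= /lex_adj /= auw.
  - by rewrite /= /lex_adj /= auw.
set T := ((x, v) : VK) |: swap S u J in bT wzT.
have eT : swap T u (fib S u) = ((x, v) : VK) |: S.
  apply/setP => [[a b]]; rewrite swapE !inE /= xpair_eqE.
  case: (eqVneq a u) => [->|nau] /=.
    by rewrite eq_sym (negbTE nxu).
  by [].
suff bS' : bipartite_set (((x, v) : VK) |: S).
  have xS : ((x, v) : VK) \in S.
    by apply: contraT => h; rewrite -(negbTE (mSx _ h)).
  by move: xn; rewrite swapE /= (negbTE nxu) xS.
rewrite -eT.
case: (@bip_out K T ((w, z) : VK) bT) => Z [sZ iZ iDZ wzZ].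
have ujZ : forall j, j \in J -> ((u, j) : VK) \in Z.
  move=> j jJ.
  have ujT : ((u, j) : VK) \in T by rewrite setU1r // swapE /= eqxx.
  rewrite (side sZ iZ iDZ ujT wzT) ?wzZ //.
  by rewrite /= /lex_adj /= auw.
apply: (swap_bip sZ iZ iDZ (subxx (fib S u)) iFu (iJJ _)).
  move=> w' y' z' wZ nw _; apply/negP => a.
  move/indepP: iZ => /(_ _ _ (ujZ _ j0J) wZ).
  by rewrite /= /lex_adj /= a.
by move=> w' y' z' _ _; rewrite setDv inE.
Qed.

Lemma prod_max (A : {set vert G}) (M : {set vert H}) : has_edge H ->
  maximal_independent A -> maximal_bipartite M ->
  maximal_bipartite (setX A M : {set VK}).
Proof.
move=> hE mA mM; have [iA mA'] := maxindP mA; have [bM mM'] := maxbipP mM.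
have [y1 [y2 [y1M y2M e]]] := maxbip_edge hE mM.
apply/andP; split.
  case/bipP: bM => Y [sY iY iMY]; apply/bipP; exists (setX A Y); split.
  - exact: setXS.
  - exact: indepX.
  - have -> : setX A M :\: setX A Y = setX A (M :\: Y) :> {set VK}.
      by apply/setP => [[a b]]; rewrite !inE /=; case: (a \in A); rewrite ?andbF.
    exact: indepX.
apply/forallP => [[x v]]; apply/implyP => xn; apply/negP => bT.
case: (boolP (x \in A)) => xA.
  have vM : v \notin M by move: xn; rewrite inE /= xA.
  have := fib_bip x bT.
  have -> : fib (((x, v) : VK) |: setX A M) x = v |: M.
    by apply/setP => b; rewrite fibE !inE /= xpair_eqE eqxx xA.
  by move/negP: (mM' v vM).
case: (mA' x xA) => a aA axa.
have m1 : ((a, y1) : VK) \in ((x, v) : VK) |: setX A M by rewrite setU1r // inE /= aA.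
have m2 : ((a, y2) : VK) \in ((x, v) : VK) |: setX A M by rewrite setU1r // inE /= aA.
apply: (triangle bT (setU11 _ _) m1 m2).
- by rewrite /= /lex_adj /= axa.
- by rewrite /= /lex_adj /= eqxx e orbT.
- by rewrite /= /lex_adj /= axa.
Qed.

End Lex4.

Lemma sum_ind (T : finType) (A : {set T}) : \sum_u (u \in A : nat) = #|A|.
Proof.
rewrite -sum1_card [RHS]big_mkcond /=; apply: eq_bigr => u _; by case: (u \in A).
Qed.

Section Lex5.
Variables G H : graph.
Local Notation K := (lex_prod G H).
Local Notation VK := (vert K).

Lemma fib_swap_eq (S : {set VK}) (u : vert G) (F : {set vert H}) :
  fib (swap S u F) u = F.
Proof. by apply/setP => v; rewrite fibE swapE /= eqxx. Qed.

Lemma fib_swap_neq (S : {set VK}) (u i : vert G) (F : {set vert H}) :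
  i != u -> fib (swap S u F) i = fib S i.
Proof. by move=> ni; apply/setP => v; rewrite !fibE swapE /= (negbTE ni). Qed.

Lemma card_swap (S : {set VK}) (u : vert G) (F : {set vert H}) :
  #|swap S u F| + #|fib S u| = #|S| + #|F|.
Proof.
rewrite !card_fib (bigD1 u) //= [\sum_u0 #|fib S u0|](bigD1 u) //=.
rewrite fib_swap_eq.
rewrite (eq_bigr (fun i => #|fib S i|)); last by move=> i ni; rewrite fib_swap_neq.
lia.
Qed.

Lemma fib_empty (S X : {set VK}) (u : vert G) : X \subset S ->
  u \notin proj X -> u \notin proj (S :\: X) -> #|fib S u| = 0.
Proof.
move=> sX uA uB; apply/eqP; rewrite cards_eq0; apply/eqP/setP => v.
rewrite fibE inE; apply/negP => h.
case: (boolP (((u, v) : VK) \in X)) => hx.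
  by move/negP: uA; apply; apply/projP; exists v.
by move/negP: uB; apply; apply/projP; exists v; rewrite inE hx h.
Qed.

Lemma wb_if : has_edge H -> well_covered G -> well_covered H -> well_bicovered H ->
  bip_num H = 2 * alpha H ->
  forall S : {set VK}, maximal_bipartite S -> #|S| = 2 * alpha G * alpha H.
Proof.
move=> hE wcG wcH wbH eb S mS.
have [bS _] := maxbipP mS; case/bipP: bS => X [sX iX iD].
have sX' := subsetDl S X.
have iD' : independent (S :\: (S :\: X)) by rewrite setDDK.
have mA := maxind_proj hE mS sX iX iD.
have mB := maxind_proj hE mS sX' iD iD'.
rewrite card_fib.
transitivity (\sum_u (alpha H * (u \in proj X) + alpha H * (u \in proj (S :\: X)))).
  apply: eq_bigr => u _.
  case uA: (u \in proj X); case uB: (u \in proj (S :\: X)).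
  - by rewrite (wb_bip wbH (fib_two mS sX iX iD uA uB)) eb /= !muln1 mul2n addnn.
  - by rewrite (wc_alpha wcH (fib_one mS sX iX iD uA (negbT uB))) /= muln1 muln0 addn0.
  - have uA' : u \notin proj (S :\: (S :\: X)) by rewrite setDDK // uA.
    by rewrite (wc_alpha wcH (fib_one mS sX' iD iD' uB uA')) /= muln1 muln0.
  - by rewrite (fib_empty sX (negbT uA) (negbT uB)) /= muln0.
rewrite big_split /= -!big_distrr /= !sum_ind (wc_alpha wcG mA) (wc_alpha wcG mB).
by rewrite addnn -mul2n mulnA mulnAC.
Qed.

Lemma only_if : has_edge G -> has_edge H -> well_bicovered K ->
  well_covered G /\ (well_covered H /\ well_bicovered H /\ bip_num H = 2 * alpha H).
Proof.
move=> hG hE wbK.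
have wcG : well_covered G.
  move=> A1 A2 m1 m2; case: (bip_max H) => M mM _.
  have e := wbK _ _ (prod_max hE m1 mM) (prod_max hE m2 mM).
  rewrite !cardsX in e.
  have [y1 [y2 [y1M _ _]]] := maxbip_edge hE mM.
  have Mpos : 0 < #|M| by apply/card_gt0P; exists y1.
  by apply/eqP; rewrite -(eqn_pmul2r Mpos) e.
have wbH : well_bicovered H.
  move=> M1 M2 m1 m2; case: (alpha_max G) => A mA _.
  have e := wbK _ _ (prod_max hE mA m1) (prod_max hE mA m2).
  rewrite !cardsX in e.
  case: hG => x0 _.
  have [a aA] := maxind_nonempty x0 mA.
  have Apos : 0 < #|A| by apply/card_gt0P; exists a.
  by apply/eqP; rewrite -(eqn_pmul2l Apos) e.
case: hG => a [b ab].
case: (hE) => h _.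
pose S0 : {set VK} := [set ((a, h) : VK); ((b, h) : VK)].
have abK : adj ((a, h) : VK) ((b, h) : VK) by rewrite /= /lex_adj /= ab.
have bS0 : bipartite_set S0.
  apply/bipP; exists [set ((a, h) : VK)]; split.
  - by rewrite sub1set !inE eqxx.
  - exact: indep1.
  - apply: (indep_sub _ (indep1 ((b, h) : VK))); apply/subsetP => p.
    by rewrite !inE => /andP[/negbTE-> /=].
case: (extend_max bS0) => S sS mS0; have mS : maximal_bipartite S := mS0.
have aS : ((a, h) : VK) \in S by apply: (subsetP sS); rewrite !inE eqxx.
have bS : ((b, h) : VK) \in S by apply: (subsetP sS); rewrite !inE eqxx orbT.
have bipS : bipartite_set S by case/andP: mS.
case: (@bip_out K S ((b, h) : VK) bipS) => X [sX iX iD bX].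
have aX : ((a, h) : VK) \in X by rewrite (side sX iX iD aS bS abK).
have uA : a \in proj X by apply/projP; exists h.
have uB : a \notin proj (S :\: X).
  apply/negP => /projP [y ay].
  move/indepP: iD => /(_ _ _ ay (_ : ((b, h) : VK) \in S :\: X)).
  by rewrite !inE bX bS /= /lex_adj /= ab => /(_ isT).
have wcH : well_covered H.
  have key : forall J : {set vert H}, maximal_independent J -> #|J| = #|fib S a|.
    move=> J mJ.
    have e := wbK _ _ mS (fib_replace hE mS sX iX iD uA uB mJ).
    by have := card_swap S a J; rewrite -e => /addnI ->.
  by move=> J1 J2 m1 m2; rewrite (key _ m1) (key _ m2).
split=> //; split=> //; split=> //.
have sX' := subsetDl S X.
have iD' : independent (S :\: (S :\: X)) by rewrite setDDK.
have mA := maxind_proj hE mS sX iX iD.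
have mB := maxind_proj hE mS sX' iD iD'.
case: (bip_max H) => M mM eM.
have e1 := wbK _ _ mS (prod_max hE mA mM).
have e2 := wbK _ _ mS (prod_max hE mB mM).
rewrite cardsX eM in e1; rewrite cardsX eM in e2.
have le := bip_le2 H.
apply/eqP; rewrite eqn_leq le /=; apply: contraT; rewrite -ltnNge => lt.
have : \sum_u (bip_num H * (u \in proj X) + bip_num H * (u \in proj (S :\: X)))
       < \sum_u 2 * #|fib S u|.
  rewrite (bigD1 a) //= [\sum_u 2 * _](bigD1 a) //= -addSn.
  apply: leq_add.
    by rewrite uA (negbTE uB) (wc_alpha wcH (fib_one mS sX iX iD uA uB)) /= muln1 muln0 addn0.
  apply: leq_sum => u _.
  case uA': (u \in proj X); case uB': (u \in proj (S :\: X)).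
  - by rewrite (wb_bip wbH (fib_two mS sX iX iD uA' uB')) /= !muln1 mul2n addnn.
  - by rewrite (wc_alpha wcH (fib_one mS sX iX iD uA' (negbT uB'))) /= muln1 muln0 addn0.
  - have uA2 : u \notin proj (S :\: (S :\: X)) by rewrite setDDK // uA'.
    by rewrite (wc_alpha wcH (fib_one mS sX' iD iD' uB' uA2)) /= muln1 muln0.
  - by rewrite /= !muln0.
rewrite big_split /= -!big_distrr /= !sum_ind -card_fib.
by rewrite [X in X + _]mulnC [X in _ + X]mulnC -e1 -e2 addnn -mul2n ltnn.
Qed.

End Lex5.

Unset Implicit Arguments.

Theorem mainTheorem4 (G H : graph) :
  has_edge G -> has_edge H ->
  (well_bicovered (lex_prod G H) <->
   (well_covered G /\
    (well_covered H /\ well_bicovered H /\ bip_num H = 2 * alpha H))).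
Proof.
move=> hG hH; split; first exact: only_if.
case=> wcG [wcH [wbH eb]] S1 S2 m1 m2.
by rewrite (wb_if hH wcG wcH wbH eb m1) (wb_if hH wcG wcH wbH eb m2).
Qed.
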